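(* Let $A$ be any of $L_d$, $C_d$ ($d\in\{2,3,\dots\}$), or $L_\infty$, and let $p\in[1,\infty)\setminus\{2\}$. Then there exists an injective free spatial representation of $A$ on $l^p(\mathbb{Z}_{>0})$.
   Context: $L_d$ is the universal complex unital algebra generated by $s_1,\dots,s_d,t_1,\dots,t_d$ with $t_js_j=1$, $t_js_k=0$ ($j\ne k$), $\sum_js_jt_j=1$; $C_d$ has the same generators with only $t_js_j=1$, $t_js_k=0$ ($j\ne k$); $L_\infty$ is on $s_1,s_2,\dots,t_1,t_2,\dots$ with $t_js_j=1$, $t_js_k=0$ ($j\ne k$). A representation is a unital algebra homomorphism into $L(E)$. A representation $\rho$ on $L^p(X,\mu)$ is free if there is a measurable partition $X=\coprod_{m\in\mathbb{Z}}E_m$ with $\rho(s_j)(L^p(E_m,\mu))\subset L^p(E_{m+1},\mu)$ and $\rho(t_j)(L^p(E_m,\mu))\subset L^p(E_{m-1},\mu)$ for all $m$ and $j$ (here $L^p(E,\mu)$ is the subspace of functions vanishing off $E$). $\rho$ is spatial if each $\rho(s_j)$, $\rho(t_j)$ is a spatial partial isometry with $\rho(t_j)$ the reverse of $\rho(s_j)$. Spatial partial isometries: Let $(X,\mathcal{B},\mu)$, $(Y,\mathcal{C},\nu)$ be $\sigma$-finite measure spaces, $\mathcal{N}(\mu)$ the $\mu$-null sets, $\mathcal{B}/\mathcal{N}(\mu)$ the Boolean $\sigma$-algebra of measurable sets modulo null sets. A measurable set transformation is a map $S\colon\mathcal{B}/\mathcal{N}(\mu)\to\mathcal{C}/\mathcal{N}(\nu)$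 which is a Boolean algebra homomorphism preserving countable unions; it induces a unique linear map $S_*$ on measurable functions mod a.e. equality with $S_*(\chi_E)=\chi_{S(E)}$ preserving a.e. limits of sequences; for bijective $S$, $S_*(\mu)(F)=\mu(E)$ when $S([E])=[F]$. A spatial system is $(E,F,S,g)$ with $E\in\mathcal{B}$, $F\in\mathcal{C}$, $S$ a bijective measurable set transformation from $(E,\mu|_E)$ to $(F,\nu|_F)$, $g$ measurable on $F$ with $|g|=1$ a.e.; the associated spatial partial isometry is $(s\xi)(y)=g(y)[\tfrac{dS_*(\mu|_E)}{d\nu|_F}(y)]^{1/p}S_*(\xi|_E)(y)$ on $F$ and $0$ off $F$; its reverse has spatial system $(F,E,S^{-1},(S^{-1})_*(g)^{-1})$. *)

(* Defs.v *)
From Stdlib Require Import Bool Reals ZArith.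
Open Scope R_scope.

Definition C : Type := (R * R)%type.
Definition C0 : C := (0, 0).
Definition C1 : C := (1, 0).
Definition RtoC (r : R) : C := (r, 0).
Definition Cadd (z w : C) : C := (fst z + fst w, snd z + snd w).
Definition Cmul (z w : C) : C :=
  (fst z * fst w - snd z * snd w, fst z * snd w + snd z * fst w).
Definition Copp (z : C) : C := (- fst z, - snd z).
Definition Cmod (z : C) : R := sqrt (fst z ^ 2 + snd z ^ 2).
Definition Cinv (z : C) : C :=
  (fst z / (fst z ^ 2 + snd z ^ 2), - snd z / (fst z ^ 2 + snd z ^ 2)).
Definition Cconv (u : nat -> C) (l : C) : Prop :=
  Un_cv (fun n => fst (u n)) (fst l) /\ Un_cv (fun n => snd (u n)) (snd l).

(** real power with the convention 0^y = 0 (x <= 0 gives 0) *)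
Definition rpow (x y : R) : R := if Rle_dec x 0 then 0 else Rpower x y.

(** * The measure space: X = Z_{>0}, encoded as nat (n stands for n+1),
    with counting measure. Every subset is measurable, the only null set is
    the empty set, so B/N(mu) is the power set; subsets are nat -> bool. *)
Definition nset := nat -> bool.
Definition subset (A B : nset) : Prop := forall x, A x = true -> B x = true.
Definition seteq (A B : nset) : Prop := forall x, A x = B x.
Definition indic (A : nset) : nat -> C := fun x => if A x then C1 else C0.
Definition restrict (A : nset) (f : nat -> C) : nat -> C :=
  fun x => if A x then f x else C0.

Fixpoint psum (f : nat -> R) (A : nset) (n : nat) : R :=
  match n with
  | O => 0
  | Datatypes.S m => psum f A m + (if A m then f m else 0)
  end.

(** For nonnegative f, g: sum_{x in A} f x = sum_{y in B} g y in [0, oo]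
    (both partial-sum sequences are nondecreasing, so they either converge
    to the same limit or both diverge). *)
Definition ext_sum_eq (f : nat -> R) (A : nset) (g : nat -> R) (B : nset) : Prop :=
  forall l, Un_cv (psum f A) l <-> Un_cv (psum g B) l.

Definition pnorm_partial (p : R) (f : nat -> C) (n : nat) : R :=
  psum (fun k => rpow (Cmod (f k)) p) (fun _ => true) n.
Definition in_lp (p : R) (f : nat -> C) : Prop :=
  exists M, forall n, pnorm_partial p f n <= M.

(** operators; an element of L(l^p) is an op that is linear, maps l^p to
    l^p and is bounded; two ops are equal in L(l^p) if they agree on l^p. *)
Definition op := (nat -> C) -> (nat -> C).
Definition bounded_op (p : R) (T : op) : Prop :=
  (forall f, in_lp p f -> in_lp p (T f)) /\
  (forall f g, in_lp p f -> in_lp p g -> forall x,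
      T (fun y => Cadd (f y) (g y)) x = Cadd (T f x) (T g x)) /\
  (forall c f, in_lp p f -> forall x,
      T (fun y => Cmul c (f y)) x = Cmul c (T f x)) /\
  (exists K, 0 <= K /\ forall f M, (forall n, pnorm_partial p f n <= M) ->
      forall n, pnorm_partial p (T f) n <= K * M).
Definition opeq (p : R) (T1 T2 : op) : Prop :=
  forall f, in_lp p f -> forall x, T1 f x = T2 f x.

(** Sg : measurable set transformation from (E, mu|_E) to (F, nu|_F):
    a Boolean sigma-homomorphism of the (restricted) algebras mod null sets. *)
Definition is_mst (E F : nset) (Sg : nset -> nset) : Prop :=
  (forall A B, subset A E -> seteq A B -> seteq (Sg A) (Sg B)) /\
  (forall A, subset A E -> subset (Sg A) F) /\
  seteq (Sg E) F /\
  (forall A, subset A E ->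
     seteq (Sg (fun x => E x && negb (A x))) (fun y => F y && negb (Sg A y))) /\
  (forall A B, subset A E -> subset B E ->
     seteq (Sg (fun x => A x && B x)) (fun y => Sg A y && Sg B y)) /\
  (forall (An : nat -> nset) (U : nset), (forall n, subset (An n) E) ->
     (forall x, U x = true <-> exists n, An n x = true) ->
     forall y, Sg U y = true <-> exists n, Sg (An n) y = true).

Definition is_bij_mst (E F : nset) (Sg : nset -> nset) : Prop :=
  is_mst E F Sg /\
  (forall A B, subset A E -> subset B E -> seteq (Sg A) (Sg B) -> seteq A B) /\
  (forall B, subset B F -> exists A, subset A E /\ seteq (Sg A) B).

Definition is_inverse (E F : nset) (Sg Sg' : nset -> nset) : Prop :=
  (forall A, subset A E -> seteq (Sg' (Sg A)) A) /\
  (forall B, subset B F -> seteq (Sg (Sg' B)) B).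

(** T is the induced map Sg_* on measurable functions mod a.e. equality *)
Definition is_push (E F : nset) (Sg : nset -> nset) (T : op) : Prop :=
  (forall f g, (forall x, E x = true -> f x = g x) ->
     forall y, F y = true -> T f y = T g y) /\
  (forall A, subset A E -> forall y, F y = true -> T (indic A) y = indic (Sg A) y) /\
  (forall f g y, F y = true ->
     T (fun x => Cadd (f x) (g x)) y = Cadd (T f y) (T g y)) /\
  (forall c f y, F y = true -> T (fun x => Cmul c (f x)) y = Cmul c (T f y)) /\
  (forall (fn : nat -> nat -> C) f,
     (forall x, E x = true -> Cconv (fun n => fn n x) (f x)) ->
     forall y, F y = true -> Cconv (fun n => T (fn n) y) (T f y)).

(** h is the Radon-Nikodym derivative d Sg_*(mu|_E) / d nu|_F :
    Sg_*(mu|_E)(Sg A) = mu(A) = int_{Sg A} h d nu for every A subset of E. *)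
Definition is_RN (E F : nset) (Sg : nset -> nset) (h : nat -> R) : Prop :=
  (forall y, F y = true -> 0 <= h y) /\
  (forall A, subset A E -> ext_sum_eq (fun _ => 1) A h (Sg A)).

Definition unimod (F : nset) (g : nat -> C) : Prop :=
  forall y, F y = true -> Cmod (g y) = 1.

(** the spatial partial isometry associated to (E, F, Sg, g), with
    T = Sg_* and h = dSg_*(mu|_E)/dnu|_F *)
Definition spi (p : R) (E F : nset) (g : nat -> C) (T : op) (h : nat -> R) : op :=
  fun xi y => if F y
    then Cmul (g y) (Cmul (RtoC (rpow (h y) (1 / p))) (T (restrict E xi) y))
    else C0.

(** s is a spatial partial isometry and t is its reverse, whose spatial
    system is (F, E, Sg^{-1}, (Sg^{-1})_*(g)^{-1}) *)
Definition spatial_pair (p : R) (s t : op) : Prop :=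
  exists (E F : nset) (Sg Sg' : nset -> nset) (g : nat -> C) (T T' : op)
         (h h' : nat -> R),
    is_bij_mst E F Sg /\ is_bij_mst F E Sg' /\ is_inverse E F Sg Sg' /\
    is_push E F Sg T /\ is_push F E Sg' T' /\
    is_RN E F Sg h /\ is_RN F E Sg' h' /\ unimod F g /\
    opeq p s (spi p E F g T h) /\
    opeq p t (spi p F E (fun x => Cinv (T' g x)) T' h').

(** * The universal algebras L_d, C_d, L_infty, by generators and relations.
    Generators s_{j+1} = gs j, t_{j+1} = gt j (0-based indices). *)
Inductive gen : Type := gs (j : nat) | gt (j : nat).
Definition gen_idx (a : gen) : nat := match a with gs j => j | gt j => j end.

Inductive term : Type :=
| tgen (a : gen)
| tscal (c : C)          (* c * 1 *)
| tadd (a b : term)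
| tmul (a b : term).

Inductive kind : Type := KL (d : nat) | KC (d : nat) | KLinf.
Definition kind_ok (k : kind) : Prop :=
  match k with KL d => (2 <= d)%nat | KC d => (2 <= d)%nat | KLinf => True end.
Definition gen_ok (k : kind) (a : gen) : Prop :=
  match k with KL d => (gen_idx a < d)%nat | KC d => (gen_idx a < d)%nat
             | KLinf => True end.
Fixpoint term_ok (k : kind) (t : term) : Prop :=
  match t with
  | tgen a => gen_ok k a
  | tscal _ => True
  | tadd a b => term_ok k a /\ term_ok k b
  | tmul a b => term_ok k a /\ term_ok k b
  end.

Fixpoint sum_st (d : nat) : term :=
  match d with
  | O => tscal C0
  | Datatypes.S m => tadd (sum_st m) (tmul (tgen (gs m)) (tgen (gt m)))
  end.

Inductive rel (k : kind) : term -> term -> Prop :=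
| rel_ts j : gen_ok k (gs j) -> rel k (tmul (tgen (gt j)) (tgen (gs j))) (tscal C1)
| rel_tsk j l : gen_ok k (gs j) -> gen_ok k (gs l) -> j <> l ->
    rel k (tmul (tgen (gt j)) (tgen (gs l))) (tscal C0)
| rel_sum d : k = KL d -> rel k (sum_st d) (tscal C1).

(** equality in the universal unital complex algebra: the congruence
    generated by the unital C-algebra axioms and the relations *)
Inductive aeq (k : kind) : term -> term -> Prop :=
| aeq_rel a b : rel k a b -> aeq k a b
| aeq_refl a : aeq k a a
| aeq_sym a b : aeq k a b -> aeq k b a
| aeq_trans a b c : aeq k a b -> aeq k b c -> aeq k a c
| aeq_add a a' b b' : aeq k a a' -> aeq k b b' -> aeq k (tadd a b) (tadd a' b')
| aeq_mul a a' b b' : aeq k a a' -> aeq k b b' -> aeq k (tmul a b) (tmul a' b')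
| aeq_addA a b c : aeq k (tadd a (tadd b c)) (tadd (tadd a b) c)
| aeq_addC a b : aeq k (tadd a b) (tadd b a)
| aeq_add0 a : aeq k (tadd a (tscal C0)) a
| aeq_addN a : aeq k (tadd a (tmul (tscal (Copp C1)) a)) (tscal C0)
| aeq_mulA a b c : aeq k (tmul a (tmul b c)) (tmul (tmul a b) c)
| aeq_mul1l a : aeq k (tmul (tscal C1) a) a
| aeq_mul1r a : aeq k (tmul a (tscal C1)) a
| aeq_mulDl a b c : aeq k (tmul (tadd a b) c) (tadd (tmul a c) (tmul b c))
| aeq_mulDr a b c : aeq k (tmul a (tadd b c)) (tadd (tmul a b) (tmul a c))
| aeq_scal_add c e : aeq k (tadd (tscal c) (tscal e)) (tscal (Cadd c e))
| aeq_scal_mul c e : aeq k (tmul (tscal c) (tscal e)) (tscal (Cmul c e))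
| aeq_scal_comm c a : aeq k (tmul (tscal c) a) (tmul a (tscal c)).

Fixpoint eval (rho : gen -> op) (t : term) : op :=
  match t with
  | tgen a => rho a
  | tscal c => fun f x => Cmul c (f x)
  | tadd a b => fun f x => Cadd (eval rho a f x) (eval rho b f x)
  | tmul a b => fun f => eval rho a (eval rho b f)
  end.

(** rho (on generators) induces a unital algebra homomorphism A -> L(l^p) *)
Definition is_rep (p : R) (k : kind) (rho : gen -> op) : Prop :=
  (forall a, gen_ok k a -> bounded_op p (rho a)) /\
  (forall a b, term_ok k a -> term_ok k b -> aeq k a b ->
     opeq p (eval rho a) (eval rho b)).

Definition rep_injective (p : R) (k : kind) (rho : gen -> op) : Prop :=
  forall a b, term_ok k a -> term_ok k b ->
    opeq p (eval rho a) (eval rho b) -> aeq k a b.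

Definition supp_in (f : nat -> C) (A : nset) : Prop :=
  forall x, A x = false -> f x = C0.

Definition rep_free (p : R) (k : kind) (rho : gen -> op) : Prop :=
  exists En : Z -> nset,
    (forall x, exists m, En m x = true) /\
    (forall m m' x, En m x = true -> En m' x = true -> m = m') /\
    (forall j, gen_ok k (gs j) -> forall (m : Z) f, in_lp p f -> supp_in f (En m) ->
       supp_in (rho (gs j) f) (En (m + 1)%Z) /\
       supp_in (rho (gt j) f) (En (m - 1)%Z)).

Definition rep_spatial (p : R) (k : kind) (rho : gen -> op) : Prop :=
  forall j, gen_ok k (gs j) -> spatial_pair p (rho (gs j)) (rho (gt j)).

(* Main.v *)
Require Import Defs.
From Stdlib Require Import Reals ZArith Lra Lia List Setoid Morphisms Ring Cantor.
Require Import Defs.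
Import ListNotations.
Import Defs.
Open Scope bool_scope.
Open Scope R_scope.


Definition Csub (z w : C) : C := Cadd z (Copp w).

Lemma Cring : ring_theory C0 C1 Cadd Cmul Csub Copp (@eq C).
Proof.
  constructor; intros;
  repeat match goal with z : C |- _ => destruct z end;
  unfold Csub, C0, C1, Cadd, Cmul, Copp; simpl; f_equal; ring.
Qed.
Add Ring Cr : Cring.

Section Alg.
Variable k : kind.
Local Notation "a ≡ b" := (aeq k a b) (at level 70).

Global Instance aeq_equiv : Equivalence (aeq k).
Proof. split; [intro; apply aeq_refl | intros ??; apply aeq_sym | intros ???; apply aeq_trans]. Qed.
Global Instance tadd_proper : Proper (aeq k ==> aeq k ==> aeq k) tadd.
Proof. intros ?? H ?? H'; now apply aeq_add. Qed.
Global Instance tmul_proper : Proper (aeq k ==> aeq k ==> aeq k) tmul.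
Proof. intros ?? H ?? H'; now apply aeq_mul. Qed.

Lemma add0l a : tadd (tscal C0) a ≡ a.
Proof. rewrite aeq_addC. apply aeq_add0. Qed.

Lemma scal_mul' c e : tmul (tscal c) (tscal e) ≡ tscal (Cmul c e).
Proof. apply aeq_scal_mul. Qed.

Lemma mul_scal0 a : tmul (tscal C0) a ≡ tscal C0.
Proof.
  set (z := tmul (tscal C0) a).
  assert (Hz : z ≡ tadd z z).
  { unfold z. rewrite <- aeq_mulDl. rewrite aeq_scal_add.
    replace (Cadd C0 C0) with C0 by ring. reflexivity. }
  transitivity (tadd z (tadd z (tmul (tscal (Copp C1)) z))).
  { rewrite aeq_addN. symmetry. apply aeq_add0. }
  rewrite aeq_addA. rewrite <- Hz. apply aeq_addN.
Qed.

Lemma mul0r a : tmul a (tscal C0) ≡ tscal C0.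
Proof. rewrite <- aeq_scal_comm. apply mul_scal0. Qed.

Lemma scal_assoc c e a : tmul (tscal c) (tmul (tscal e) a) ≡ tmul (tscal (Cmul c e)) a.
Proof. rewrite aeq_mulA, aeq_scal_mul. reflexivity. Qed.

Lemma scal_pull a c b : tmul a (tmul (tscal c) b) ≡ tmul (tscal c) (tmul a b).
Proof. rewrite aeq_mulA, <- aeq_scal_comm, <- aeq_mulA. reflexivity. Qed.

Lemma scal_add_same c e a :
  tadd (tmul (tscal c) a) (tmul (tscal e) a) ≡ tmul (tscal (Cadd c e)) a.
Proof. rewrite <- aeq_mulDl, aeq_scal_add. reflexivity. Qed.

Lemma diff_zero a b : tadd a (tmul (tscal (Copp C1)) b) ≡ tscal C0 -> a ≡ b.
Proof.
  intro H.
  assert (Hb : tadd (tmul (tscal (Copp C1)) b) b ≡ tscal C0).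
  { rewrite aeq_addC. apply aeq_addN. }
  rewrite <- (aeq_add0 k a). rewrite <- Hb. rewrite aeq_addA. rewrite H. apply add0l.
Qed.
End Alg.


Fixpoint sprod (mu : list nat) : term :=
  match mu with [] => tscal C1 | j :: m => tmul (tgen (gs j)) (sprod m) end.
Fixpoint tprod (nu : list nat) : term :=
  match nu with [] => tscal C1 | j :: m => tmul (tprod m) (tgen (gt j)) end.
Definition mon (mu nu : list nat) : term := tmul (sprod mu) (tprod nu).
Definition entry := (C * (list nat * list nat))%type.
Fixpoint reify (L : list entry) : term :=
  match L with
  | [] => tscal C0
  | (c, (mu, nu)) :: L' => tadd (tmul (tscal c) (mon mu nu)) (reify L')
  end.

Fixpoint red (nu mu : list nat) : option (list nat * list nat) :=
  match nu, mu with
  | [], _ => Some (mu, [])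
  | _, [] => Some ([], nu)
  | j :: nu', j' :: mu' => if Nat.eqb j j' then red nu' mu' else None
  end.

Definition mmul (p q : list nat * list nat) : option (list nat * list nat) :=
  match red (snd p) (fst q) with
  | Some (a, b) => Some (fst p ++ a, snd q ++ b)
  | None => None
  end.

Definition emul (e e' : entry) : list entry :=
  match mmul (snd e) (snd e') with
  | Some q => [(Cmul (fst e) (fst e'), q)]
  | None => []
  end.

Definition Lmul (L1 L2 : list entry) : list entry :=
  flat_map (fun e => flat_map (fun e' => emul e e') L2) L1.

Section NF.
Variable k : kind.
Local Notation "a ≡ b" := (aeq k a b) (at level 70).
Definition ok (j : nat) : Prop := gen_ok k (gs j).
Definition wok (w : list nat) : Prop := Forall ok w.
Definition eok (e : entry) : Prop := wok (fst (snd e)) /\ wok (snd (snd e)).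

Lemma sprod_app mu a : sprod (mu ++ a) ≡ tmul (sprod mu) (sprod a).
Proof.
  induction mu as [|j mu IH]; simpl.
  - symmetry; apply aeq_mul1l.
  - rewrite IH, aeq_mulA. reflexivity.
Qed.

Lemma tprod_app nu b : tprod (nu ++ b) ≡ tmul (tprod b) (tprod nu).
Proof.
  induction nu as [|j nu IH]; simpl.
  - symmetry; apply aeq_mul1r.
  - rewrite IH, aeq_mulA. reflexivity.
Qed.

Lemma red_spec nu mu : wok nu -> wok mu ->
  match red nu mu with
  | Some (a, b) => tmul (tprod nu) (sprod mu) ≡ mon a b /\ wok a /\ wok b
  | None => tmul (tprod nu) (sprod mu) ≡ tscal C0
  end.
Proof.
  revert mu; induction nu as [|j nu IH]; intros mu Hn Hm.
  - simpl. split; [|split; [exact Hm | constructor]].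
    unfold mon; simpl. rewrite aeq_mul1l, aeq_mul1r. reflexivity.
  - destruct mu as [|j' mu].
    + simpl. split; [|split; [constructor|exact Hn]].
      unfold mon; simpl. rewrite aeq_mul1l, aeq_mul1r. reflexivity.
    + inversion Hn; subst. inversion Hm; subst.
      simpl. destruct (Nat.eqb_spec j j') as [->|Hne].
      * specialize (IH mu ltac:(assumption) ltac:(assumption)).
        assert (E : tmul (tmul (tprod nu) (tgen (gt j'))) (tmul (tgen (gs j')) (sprod mu))
                  ≡ tmul (tprod nu) (sprod mu)).
        { rewrite <- aeq_mulA, (aeq_mulA k (tgen (gt j'))).
          rewrite (aeq_rel k _ _ (rel_ts k j' ltac:(assumption))).
          rewrite aeq_mul1l. reflexivity. }
        destruct (red nu mu) as [[a b]|].
        -- destruct IH as [IH1 IH2]. split; [|exact IH2]. rewrite E. exact IH1.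
        -- rewrite E. exact IH.
      * rewrite <- aeq_mulA, (aeq_mulA k (tgen (gt j))).
        rewrite (aeq_rel k _ _ (rel_tsk k j j' ltac:(assumption) ltac:(assumption) Hne)).
        rewrite mul_scal0, mul0r. reflexivity.
Qed.

Lemma mmul_spec p q : wok (fst p) -> wok (snd p) -> wok (fst q) -> wok (snd q) ->
  match mmul p q with
  | Some r => tmul (mon (fst p) (snd p)) (mon (fst q) (snd q)) ≡ mon (fst r) (snd r)
              /\ wok (fst r) /\ wok (snd r)
  | None => tmul (mon (fst p) (snd p)) (mon (fst q) (snd q)) ≡ tscal C0
  end.
Proof.
  destruct p as [mu nu], q as [mu' nu']; simpl; intros H1 H2 H3 H4.
  unfold mmul; simpl.
  pose proof (red_spec nu mu' H2 H3) as R.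
  assert (E : tmul (mon mu nu) (mon mu' nu') ≡
              tmul (sprod mu) (tmul (tmul (tprod nu) (sprod mu')) (tprod nu'))).
  { unfold mon. rewrite !aeq_mulA. reflexivity. }
  destruct (red nu mu') as [[a b]|].
  - destruct R as [R [Ra Rb]]. simpl. split.
    + rewrite E, R. unfold mon. rewrite sprod_app, tprod_app, !aeq_mulA. reflexivity.
    + split; apply Forall_app; auto.
  - rewrite E, R, mul_scal0, mul0r. reflexivity.
Qed.

Lemma reify_app L1 L2 : reify (L1 ++ L2) ≡ tadd (reify L1) (reify L2).
Proof.
  induction L1 as [|[c [mu nu]] L1 IH]; simpl.
  - symmetry; apply add0l.
  - rewrite IH, aeq_addA. reflexivity.
Qed.

Lemma emul_spec e e' : eok e -> eok e' ->
  tmul (reify [e]) (reify [e']) ≡ reify (emul e e') /\ Forall eok (emul e e').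
Proof.
  destruct e as [c [mu nu]], e' as [c' [mu' nu']]; intros [H1 H2] [H3 H4]; simpl in *.
  pose proof (mmul_spec (mu, nu) (mu', nu') H1 H2 H3 H4) as M; simpl in M.
  unfold emul; simpl.
  assert (E : tmul (tadd (tmul (tscal c) (mon mu nu)) (tscal C0))
                (tadd (tmul (tscal c') (mon mu' nu')) (tscal C0))
            ≡ tmul (tscal (Cmul c c')) (tmul (mon mu nu) (mon mu' nu'))).
  { rewrite !aeq_add0. rewrite <- aeq_mulA, scal_pull, scal_assoc. reflexivity. }
  destruct (mmul (mu, nu) (mu', nu')) as [[a b]|].
  - destruct M as [M [Ma Mb]]. simpl in *. split.
    + rewrite E, M, aeq_add0. reflexivity.
    + repeat constructor; assumption.
  - split; [|constructor]. rewrite E, M, mul0r. reflexivity.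
Qed.

Lemma reify_single c mu nu : reify [(c, (mu, nu))] ≡ tmul (tscal c) (mon mu nu).
Proof. simpl. apply aeq_add0. Qed.

Lemma reify_cons e L : reify (e :: L) ≡ tadd (reify [e]) (reify L).
Proof. destruct e as [c [mu nu]]. simpl. rewrite aeq_add0. reflexivity. Qed.

Lemma reify_mul L1 L2 : Forall eok L1 -> Forall eok L2 ->
  tmul (reify L1) (reify L2) ≡ reify (Lmul L1 L2) /\ Forall eok (Lmul L1 L2).
Proof.
  intros H1 H2. induction H1 as [|e L1 He H1 IH]; simpl.
  - split; [apply mul_scal0 | constructor].
  - assert (Inner : tmul (reify [e]) (reify L2) ≡ reify (flat_map (fun e' => emul e e') L2)
                    /\ Forall eok (flat_map (fun e' => emul e e') L2)).
    { clear IH H1. induction H2 as [|e' L2 He' H2 IH2]; simpl.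
      - split; [apply mul0r | constructor].
      - destruct (emul_spec e e' He He') as [A B]. destruct IH2 as [C1' D].
        split.
        + rewrite reify_app, <- A, <- C1', (reify_cons e' L2), aeq_mulDr. reflexivity.
        + apply Forall_app; auto. }
    destruct Inner as [A B]. destruct IH as [C1' D]. split.
    + rewrite reify_app, <- A, <- C1'. rewrite (reify_cons e L1), aeq_mulDl. reflexivity.
    + apply Forall_app; auto.
Qed.

Lemma nf_exists t : term_ok k t -> exists L, Forall eok L /\ t ≡ reify L.
Proof.
  induction t as [a|c|a IHa b IHb|a IHa b IHb]; simpl; intro Ht.
  - destruct a as [j|j].
    + exists [(C1, ([j], []))]. split.
      * repeat constructor. exact Ht.
      * rewrite reify_single. unfold mon; simpl. rewrite aeq_mul1l, !aeq_mul1r. reflexivity.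
    + exists [(C1, ([], [j]))]. split.
      * repeat constructor. exact Ht.
      * rewrite reify_single. unfold mon; simpl. rewrite !aeq_mul1l. reflexivity.
  - exists [(c, ([], []))]. split.
    + repeat constructor.
    + rewrite reify_single. unfold mon; simpl. rewrite aeq_mul1l, aeq_scal_mul.
      replace (Cmul c C1) with c by ring. reflexivity.
  - destruct Ht as [Ha Hb]. destruct (IHa Ha) as [L1 [O1 E1]], (IHb Hb) as [L2 [O2 E2]].
    exists (L1 ++ L2). split; [apply Forall_app; auto|]. rewrite reify_app, E1, E2. reflexivity.
  - destruct Ht as [Ha Hb]. destruct (IHa Ha) as [L1 [O1 E1]], (IHb Hb) as [L2 [O2 E2]].
    destruct (reify_mul L1 L2 O1 O2) as [A B]. exists (Lmul L1 L2). split; auto.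
    rewrite E1, E2. exact A.
Qed.
End NF.


Definition pad1 (d : nat) (e : entry) : list entry :=
  map (fun j => (fst e, (fst (snd e) ++ [j], snd (snd e) ++ [j]))) (seq 0 d).
Fixpoint padk (d n : nat) (e : entry) : list entry :=
  match n with 0 => [e] | S n' => flat_map (padk d n') (pad1 d e) end.
Definition nlen (e : entry) : nat := length (snd (snd e)).
Fixpoint maxlen (L : list entry) : nat :=
  match L with [] => 0 | e :: L' => Nat.max (nlen e) (maxlen L') end.
Definition padL (d : nat) (L : list entry) : list entry :=
  flat_map (fun e => padk d (maxlen L - nlen e) e) L.

Section Pad.
Variable k : kind.
Variable d : nat.
Hypothesis Hk : k = KL d.
Local Notation "a ≡ b" := (aeq k a b) (at level 70).

Lemma pad_gen c mu nu m :
  reify (map (fun j => (c, (mu ++ [j], nu ++ [j]))) (seq 0 m))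
  ≡ tmul (tscal c) (tmul (sprod mu) (tmul (sum_st m) (tprod nu))).
Proof.
  induction m as [|m IH].
  - simpl. rewrite mul_scal0, mul0r, mul0r. reflexivity.
  - rewrite seq_S, map_app, reify_app, IH. simpl sum_st.
    simpl map. rewrite reify_single. unfold mon.
    rewrite sprod_app, tprod_app. simpl.
    rewrite aeq_mul1r, aeq_mul1l.
    rewrite (aeq_mulDl k (sum_st m)), aeq_mulDr, aeq_mulDr.
    rewrite !aeq_mulA. reflexivity.
Qed.

Lemma pad1_spec e : reify (pad1 d e) ≡ reify [e].
Proof.
  destruct e as [c [mu nu]]. unfold pad1; simpl fst; simpl snd.
  rewrite pad_gen. rewrite (aeq_rel k _ _ (rel_sum k d Hk)).
  rewrite aeq_mul1l, reify_single. reflexivity.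
Qed.

Lemma reify_flat F L : (forall e, reify (F e) ≡ reify [e]) -> reify (flat_map F L) ≡ reify L.
Proof.
  intro H. induction L as [|e L IH]; simpl.
  - reflexivity.
  - rewrite reify_app, H, IH. symmetry. apply reify_cons.
Qed.

Lemma padk_spec n e : reify (padk d n e) ≡ reify [e].
Proof.
  revert e; induction n as [|n IH]; intro e; simpl.
  - reflexivity.
  - rewrite (reify_flat _ _ IH). apply pad1_spec.
Qed.

Lemma padk_prop n e : eok k e ->
  Forall (fun e' => eok k e' /\ nlen e' = (nlen e + n)%nat) (padk d n e).
Proof.
  revert e; induction n as [|n IH]; intros e He; simpl.
  - constructor; [split; [auto|lia]|constructor].
  - apply Forall_flat_map. unfold pad1. apply Forall_map. apply Forall_forall.
    intros j Hj. apply in_seq in Hj.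
    assert (Ho : eok k (fst e, (fst (snd e) ++ [j], snd (snd e) ++ [j]))).
    { destruct He as [H1 H2]. split; simpl; apply Forall_app; split; auto;
      repeat constructor; unfold ok; rewrite Hk; simpl; lia. }
    specialize (IH _ Ho). eapply Forall_impl; [|exact IH].
    intros e' [A B]. split; auto. rewrite B. unfold nlen; simpl. rewrite length_app; simpl. lia.
Qed.

Lemma maxlen_ge L e : In e L -> (nlen e <= maxlen L)%nat.
Proof. induction L as [|e' L IH]; simpl; [tauto|]. intros [->|H]; [lia|]. specialize (IH H). lia. Qed.

Lemma padL_spec L : Forall (eok k) L ->
  reify (padL d L) ≡ reify L /\
  Forall (fun e' => eok k e' /\ nlen e' = maxlen L) (padL d L).
Proof.
  intro H. split.
  - unfold padL. apply reify_flat. intro; apply padk_spec.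
  - unfold padL. apply Forall_flat_map. apply Forall_forall. intros e He.
    pose proof (maxlen_ge L e He).
    eapply Forall_impl; [|apply padk_prop; rewrite Forall_forall in H; auto].
    intros e' [A B]. split; auto. lia.
Qed.
End Pad.


Definition mkrho (sg : nat -> nat -> nat) (pre : nat -> nat -> option nat) (a : gen) : op :=
  match a with
  | gs j => fun f x => match pre j x with Some w => f w | None => C0 end
  | gt j => fun f x => f (sg j x)
  end.

Section Sem.
Variable k : kind.
Variable sg : nat -> nat -> nat.
Variable pre : nat -> nat -> option nat.
Variable grade : nat -> Z.
Hypothesis pre_sg : forall j x, pre j (sg j x) = Some x.
Hypothesis sg_pre : forall j x y, pre j y = Some x -> sg j x = y.
Hypothesis grade_sg : forall j x, grade (sg j x) = (grade x + 1)%Z.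
Hypothesis disj : forall j j' x x', ok k j -> ok k j' -> sg j x = sg j' x' -> j = j'.
Hypothesis cover : forall d, k = KL d -> forall y, exists j x, (j < d)%nat /\ sg j x = y.
Hypothesis base : (forall d, k <> KL d) -> exists y0, forall j x, ok k j -> sg j x <> y0.

Let rho := mkrho sg pre.

Lemma eval_ext t : forall f g, (forall y, f y = g y) -> forall x, eval rho t f x = eval rho t g x.
Proof.
  induction t as [[j|j]|c|a IHa b IHb|a IHa b IHb]; intros f g H x; simpl.
  - destruct (pre j x); auto.
  - auto.
  - rewrite H; auto.
  - rewrite (IHa f g H), (IHb f g H); auto.
  - apply IHa. apply IHb. exact H.
Qed.

Lemma eval_add t : forall f g x,
  eval rho t (fun y => Cadd (f y) (g y)) x = Cadd (eval rho t f x) (eval rho t g x).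
Proof.
  induction t as [[j|j]|c|a IHa b IHb|a IHa b IHb]; intros f g x; simpl.
  - destruct (pre j x); auto. unfold C0, Cadd; simpl; f_equal; ring.
  - auto.
  - ring.
  - rewrite IHa, IHb. ring.
  - rewrite <- IHa. apply eval_ext. intro y. apply IHb.
Qed.

Lemma eval_hom t : forall c f x,
  eval rho t (fun y => Cmul c (f y)) x = Cmul c (eval rho t f x).
Proof.
  induction t as [[j|j]|c'|a IHa b IHb|a IHa b IHb]; intros c f x; simpl.
  - destruct (pre j x); auto. unfold C0, Cmul; simpl; f_equal; ring.
  - auto.
  - ring.
  - rewrite IHa, IHb. ring.
  - rewrite <- IHa. apply eval_ext. intro y. apply IHb.
Qed.

Definition inR (m : nat) (x : nat) : bool :=
  existsb (fun j => match pre j x with Some _ => true | None => false end) (seq 0 m).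

Lemma eval_sum_st d m : k = KL d -> (m <= d)%nat -> forall f x,
  eval rho (sum_st m) f x = if inR m x then f x else C0.
Proof.
  intros Hk. induction m as [|m IH]; intros Hm f x; simpl.
  - unfold inR; simpl. ring.
  - rewrite IH by lia. unfold inR. rewrite seq_S, existsb_app. simpl.
    fold (inR m x).
    destruct (pre m x) as [w|] eqn:E.
    + rewrite (sg_pre _ _ _ E).
      destruct (inR m x) eqn:E2.
      * exfalso. unfold inR in E2. apply existsb_exists in E2.
        destruct E2 as [j [Hj Hp]]. apply in_seq in Hj.
        destruct (pre j x) as [w'|] eqn:E3; [|discriminate].
        apply sg_pre in E3. apply sg_pre in E.
        assert (j = m). { apply (disj j m w' w); try (unfold ok; rewrite Hk; simpl; lia).
                          congruence. }
        lia.
      * simpl. ring.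
    + rewrite Bool.orb_false_r. destruct (inR m x); ring.
Qed.

Lemma sound_sem a b : aeq k a b -> forall f x, eval rho a f x = eval rho b f x.
Proof.
  induction 1; intros f x; simpl.
  - destruct H as [j Hj|j l Hj Hl Hne|d Hk]; simpl.
    + rewrite pre_sg. ring.
    + destruct (pre l (sg j x)) as [w|] eqn:E.
      * exfalso. apply sg_pre in E. apply Hne. symmetry. eapply disj; eauto.
      * ring.
    + rewrite (eval_sum_st d d Hk (le_n _)).
      destruct (inR d x) eqn:E; [ring|].
      exfalso. destruct (cover d Hk x) as [j [w [Hj Hw]]].
      assert (inR d x = true). { unfold inR. apply existsb_exists. exists j.
        split; [apply in_seq; lia|]. rewrite <- Hw, pre_sg. auto. }
      congruence.
  - reflexivity.
  - auto.
  - congruence.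
  - rewrite IHaeq1, IHaeq2. auto.
  - transitivity (eval rho a' (eval rho b f) x).
    + apply IHaeq1.
    + apply eval_ext. apply IHaeq2.
  - ring.
  - ring.
  - ring.
  - unfold C0, C1, Cadd, Cmul, Copp; simpl; f_equal; ring.
  - reflexivity.
  - ring.
  - transitivity (eval rho a f x); [|ring]. apply eval_ext. intro; ring.
  - reflexivity.
  - apply eval_add.
  - ring.
  - ring.
  - symmetry. apply eval_hom.
Qed.

Fixpoint sgw (w : list nat) (x : nat) : nat :=
  match w with [] => x | j :: w' => sg j (sgw w' x) end.
Fixpoint prew (w : list nat) (x : nat) : option nat :=
  match w with [] => Some x | j :: w' => match pre j x with Some y => prew w' y | None => None end end.

Lemma prew_sgw w x : prew w (sgw w x) = Some x.
Proof. induction w as [|j w IH]; simpl; auto. rewrite pre_sg. auto. Qed.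

Lemma sgw_prew w : forall x y, prew w y = Some x -> sgw w x = y.
Proof.
  induction w as [|j w IH]; simpl; intros x y H.
  - congruence.
  - destruct (pre j y) as [z|] eqn:E; [|discriminate].
    rewrite (IH _ _ H). apply sg_pre. auto.
Qed.

Lemma grade_sgw w x : grade (sgw w x) = (grade x + Z.of_nat (length w))%Z.
Proof. induction w as [|j w IH]; simpl; [lia|]. rewrite grade_sg, IH. lia. Qed.

Lemma eval_sprod mu : forall f x, eval rho (sprod mu) f x =
  match prew mu x with Some w => Cmul C1 (f w) | None => C0 end.
Proof.
  induction mu as [|j mu IH]; intros f x; simpl; auto.
  destruct (pre j x); auto.
Qed.

Lemma eval_tprod nu : forall f x, eval rho (tprod nu) f x = Cmul C1 (f (sgw nu x)).
Proof.
  induction nu as [|j nu IH]; intros f x; simpl; auto.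
Qed.

Lemma eval_mon mu nu f x : eval rho (mon mu nu) f x =
  match prew mu x with Some w => f (sgw nu w) | None => C0 end.
Proof.
  unfold mon. simpl. rewrite eval_sprod. destruct (prew mu x); auto.
  all: try (rewrite eval_tprod; ring).
Qed.

Lemma cancel a : forall b u v, wok k a -> wok k b -> (length a <= length b)%nat ->
  sgw a u = sgw b v -> exists r, b = a ++ r /\ u = sgw r v.
Proof.
  induction a as [|i a IH]; intros b u v Ha Hb Hl E.
  - exists b. simpl in *. auto.
  - destruct b as [|i' b]; simpl in Hl; [lia|].
    inversion Ha; subst. inversion Hb; subst. simpl in E.
    assert (i = i') by (eapply disj; eauto). subst i'.
    assert (E' : sgw a u = sgw b v).
    { pose proof (pre_sg i (sgw a u)) as P1. rewrite E, pre_sg in P1. congruence. }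
    destruct (IH b u v) as [r [Hr Hu]]; auto; try lia.
    exists r. simpl. rewrite Hr. auto.
Qed.

Definition pdec : forall p q : list nat * list nat, {p = q} + {p <> q}.
Proof. decide equality; apply list_eq_dec, Nat.eq_dec. Qed.

Definition ex (a : nat) : nat -> C := fun x => if Nat.eqb x a then C1 else C0.

Lemma contrib y mu nu mu' nu' : wok k mu -> wok k nu -> wok k mu' -> wok k nu' ->
  (length nu <= length nu')%nat ->
  (length nu' = length nu \/ forall j x, ok k j -> sg j x <> y) ->
  eval rho (mon mu' nu') (ex (sgw nu y)) (sgw mu y) =
  if pdec (mu', nu') (mu, nu) then C1 else C0.
Proof.
  intros H1 H2 H3 H4 Hl Hy. rewrite eval_mon.
  destruct (prew mu' (sgw mu y)) as [w|] eqn:E.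
  - apply sgw_prew in E.
    assert (G1 := f_equal grade E). rewrite !grade_sgw in G1.
    unfold ex. destruct (Nat.eqb_spec (sgw nu' w) (sgw nu y)) as [E2|E2].
    + assert (G2 := f_equal grade E2). rewrite !grade_sgw in G2.
      destruct (cancel mu mu' y w) as [r [Hr Hyr]]; auto; try lia.
      destruct r as [|j r].
      * rewrite app_nil_r in Hr. subst mu'. simpl in Hyr. subst w.
        destruct (cancel nu nu' y y) as [r2 [Hr2 _]]; auto; try lia.
        destruct r2 as [|j2 r2].
        -- rewrite app_nil_r in Hr2. subst. destruct (pdec (mu, nu) (mu, nu)); congruence.
        -- subst nu'. rewrite length_app in G2. simpl in G2. lia.
      * exfalso. subst mu'. rewrite length_app in G1. simpl in G1.
        destruct Hy as [Hy|Hy]; [lia|].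
        apply Forall_app in H3. destruct H3 as [_ H3]. inversion H3; subst.
        apply (Hy j (sgw r w)); auto.
    + destruct (pdec (mu', nu') (mu, nu)) as [Ep|Ep]; auto.
      inversion Ep; subst. exfalso. apply E2.
      pose proof (prew_sgw mu w) as P. rewrite E, prew_sgw in P. congruence.
  - destruct (pdec (mu', nu') (mu, nu)) as [Ep|Ep]; auto.
    inversion Ep; subst. rewrite prew_sgw in E. discriminate.
Qed.

Fixpoint coefsum (q : list nat * list nat) (L : list entry) : C :=
  match L with
  | [] => C0
  | (c, r) :: L' => Cadd (if pdec r q then c else C0) (coefsum q L')
  end.

Lemma eval_reify_cons c mu nu L f x : eval rho (reify ((c, (mu, nu)) :: L)) f x =
  Cadd (Cmul c (eval rho (mon mu nu) f x)) (eval rho (reify L) f x).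
Proof. reflexivity. Qed.

Lemma eval_reify_point y mu nu L : wok k mu -> wok k nu ->
  Forall (fun e => eok k e /\ (length nu <= nlen e)%nat /\
     (nlen e = length nu \/ forall j x, ok k j -> sg j x <> y)) L ->
  eval rho (reify L) (ex (sgw nu y)) (sgw mu y) = coefsum (mu, nu) L.
Proof.
  intros H1 H2 HL. induction HL as [|[c [mu' nu']] L [[E1 E2] [E3 E4]] HL IH].
  - simpl. ring.
  - rewrite eval_reify_cons, IH. simpl coefsum. unfold nlen in E3, E4; simpl in E1, E2, E3, E4. rewrite contrib; auto.
    destruct (pdec (mu', nu') (mu, nu)); ring.
Qed.

Definition notq (q : list nat * list nat) (e : entry) : bool :=
  if pdec (snd e) q then false else true.

Lemma decomp q L : aeq k (reify L)
  (tadd (reify (filter (notq q) L)) (tmul (tscal (coefsum q L)) (mon (fst q) (snd q)))).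
Proof.
  induction L as [|[c [mu nu]] L IH]; simpl.
  - rewrite mul_scal0. symmetry. apply aeq_add0.
  - unfold notq at 1; simpl. destruct (pdec (mu, nu) q) as [E|Hne]; simpl.
    + subst q. rewrite IH. rewrite <- scal_add_same. rewrite aeq_addA, (aeq_addC k _ (reify _)).
      rewrite aeq_addA. reflexivity.
    + replace (Cadd C0 (coefsum q L)) with (coefsum q L) by ring.
      rewrite IH. rewrite aeq_addA. reflexivity.
Qed.

Lemma filter_lt {A} (P : A -> bool) L e : In e L -> P e = false ->
  (length (filter P L) < length L)%nat.
Proof.
  induction L as [|a L IH]; simpl; [tauto|].
  assert (Hle : forall L', (length (filter P L') <= length L')%nat).
  { induction L' as [|b L' IH']; simpl; [lia|]. destruct (P b); simpl; lia. }
  intros [->|H] Hp.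
  - rewrite Hp. specialize (Hle L). lia.
  - destruct (P a); simpl; specialize (IH H Hp); lia.
Qed.

Lemma exists_min (L : list entry) : L <> [] ->
  exists e, In e L /\ forall e', In e' L -> (nlen e <= nlen e')%nat.
Proof.
  induction L as [|a L IH]; [congruence|]. intros _.
  destruct L as [|b L].
  - exists a. split; [left; auto|]. intros e' [->|[]]. lia.
  - destruct IH as [e [He Hmin]]; [discriminate|].
    destruct (Nat.le_gt_cases (nlen a) (nlen e)).
    + exists a. split; [left; auto|]. intros e' [->|H']; [lia|]. specialize (Hmin e' H'). lia.
    + exists e. split; [right; auto|]. intros e' [->|H']; [lia|]. auto.
Qed.

Variable p : R.

Lemma Cmod_C1 : Cmod C1 = 1.
Proof. unfold Cmod, C1; simpl. replace (1 * (1 * 1) + 0 * (0 * 1)) with 1 by ring. apply sqrt_1. Qed.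
Lemma Cmod_C0 : Cmod C0 = 0.
Proof. unfold Cmod, C0; simpl. replace (0 * (0 * 1) + 0 * (0 * 1)) with 0 by ring. apply sqrt_0. Qed.
Lemma rpow_1 y : rpow 1 y = 1.
Proof.
  unfold rpow. destruct (Rle_dec 1 0); [lra|]. unfold Rpower. rewrite ln_1, Rmult_0_r. apply exp_0.
Qed.
Lemma rpow_0 y : rpow 0 y = 0.
Proof. unfold rpow. destruct (Rle_dec 0 0); [auto|lra]. Qed.

Lemma ex_lp a : in_lp p (ex a).
Proof.
  exists 1. intro n. unfold pnorm_partial.
  assert (H : forall n, psum (fun k0 => rpow (Cmod (ex a k0)) p) (fun _ => true) n
                        = if Nat.ltb a n then 1 else 0).
  { induction n0 as [|n0 IH]; simpl; auto.
    rewrite IH. unfold ex. destruct (Nat.eqb_spec n0 a).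
    - subst. rewrite Cmod_C1, rpow_1. destruct (Nat.ltb_spec a a); [lia|].
      destruct (Nat.ltb_spec a (S a)); [lra|lia].
    - rewrite Cmod_C0, rpow_0. destruct (Nat.ltb_spec a n0), (Nat.ltb_spec a (S n0)); try lra; lia. }
  rewrite H. destruct (Nat.ltb a n); lra.
Qed.

Lemma core n : forall L, (length L <= n)%nat -> Forall (eok k) L ->
  (forall d, k = KL d -> forall e e', In e L -> In e' L -> nlen e = nlen e') ->
  (forall f, in_lp p f -> forall x, eval rho (reify L) f x = C0) ->
  aeq k (reify L) (tscal C0).
Proof.
  induction n as [|n IH]; intros L Hn Hok Hu Hz.
  - destruct L; [reflexivity|simpl in Hn; lia].
  - destruct L as [|e1 L1] eqn:EL; [reflexivity|]. rewrite <- EL in *.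
    destruct (exists_min L) as [[c0 [mu nu]] [He0 Hmin]]; [congruence|].
    assert (Hy : exists y, forall e', In e' L ->
       nlen e' = length nu \/ forall j x, ok k j -> sg j x <> y).
    { destruct k as [d|d|] eqn:Ek.
      - exists 0%nat. intros e' He'. left. apply (Hu d eq_refl e' _ He' He0).
      - destruct base as [y0 Hy0]; [intros d'; discriminate|]. exists y0. intros; right; auto.
      - destruct base as [y0 Hy0]; [intros d'; discriminate|]. exists y0. intros; right; auto. }
    destruct Hy as [y Hy].
    rewrite Forall_forall in Hok.
    destruct (Hok _ He0) as [Hmu Hnu]; simpl in Hmu, Hnu.
    assert (Hc : coefsum (mu, nu) L = C0).
    { rewrite <- (eval_reify_point y mu nu L); auto.
      - apply Hz. apply ex_lp.
      - apply Forall_forall. intros e' He'. split; [auto|]. split.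
        + apply (Hmin e' He').
        + apply Hy; auto. }
    set (L' := filter (notq (mu, nu)) L).
    assert (HL : aeq k (reify L) (reify L')).
    { rewrite (decomp (mu, nu) L). rewrite Hc, mul_scal0, aeq_add0. reflexivity. }
    rewrite HL. apply IH.
    + assert (length L' < length L)%nat.
      { apply (filter_lt _ _ _ He0). unfold notq; simpl. destruct (pdec (mu, nu) (mu, nu)); congruence. }
      lia.
    + apply Forall_forall. intros e' He'. apply filter_In in He'. apply Hok. tauto.
    + intros d Hd e e' He He'. apply filter_In in He. apply filter_In in He'.
      apply (Hu d Hd); tauto.
    + intros f Hf x. rewrite <- (sound_sem _ _ HL). auto.
Qed.


Lemma good_nf t : term_ok k t -> exists L, Forall (eok k) L /\ aeq k t (reify L) /\
  (forall d, k = KL d -> forall e e', In e L -> In e' L -> nlen e = nlen e').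
Proof.
  intro Ht. destruct (nf_exists k t Ht) as [L [Hok HL]].
  destruct k as [d|d|] eqn:Ek.
  - destruct (padL_spec (KL d) d eq_refl L Hok) as [A B].
    exists (padL d L). split; [|split].
    + eapply Forall_impl; [|exact B]. simpl; tauto.
    + rewrite HL. symmetry. exact A.
    + intros d' _ e e' He He'. rewrite Forall_forall in B.
      destruct (B e He) as [_ ->]. destruct (B e' He') as [_ ->]. auto.
  - exists L. split; [auto|split; [auto|]]. intros; discriminate.
  - exists L. split; [auto|split; [auto|]]. intros; discriminate.
Qed.

Lemma injective : rep_injective p k rho.
Proof.
  intros a b Ha Hb Heq. apply diff_zero.
  set (t := tadd a (tmul (tscal (Copp C1)) b)).
  assert (Ht : term_ok k t) by (simpl; tauto).
  destruct (good_nf t Ht) as [L [Hok [HL Hu]]].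
  rewrite HL. apply (core (length L)); auto.
  intros f Hf x. rewrite <- (sound_sem _ _ HL). unfold t. simpl.
  rewrite (Heq f Hf x). ring.
Qed.

Lemma is_rep_sound a b : aeq k a b -> opeq p (eval rho a) (eval rho b).
Proof. intros H f _ x. apply sound_sem. auto. Qed.

End Sem.


Lemma psum_ext (f g : nat -> R) (A B : nset) (n : nat) : (forall x, (x < n)%nat -> (if A x then f x else 0) = (if B x then g x else 0)) ->
  psum f A n = psum g B n.
Proof. induction n as [|n IH]; simpl; intro H; auto. rewrite IH by (intros; apply H; lia). rewrite H by lia. auto. Qed.

Lemma psum_remove (a : nat -> R) (B : nset) (c N : nat) : (c < N)%nat -> B c = true ->
  psum a B N = psum a (fun x => B x && negb (Nat.eqb x c)) N + a c.
Proof.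
  induction N as [|N IH]; intros Hc HB; [lia|]. simpl.
  destruct (Nat.eq_dec c N) as [->|Hne].
  - rewrite HB, Nat.eqb_refl. simpl.
    rewrite (psum_ext a a _ (fun x => B x && negb (Nat.eqb x N))); [ring|].
    intros x Hx. destruct (Nat.eqb_spec x N); [lia|]. rewrite Bool.andb_true_r. auto.
  - rewrite IH; [|lia|auto]. destruct (Nat.eqb_spec N c); [lia|]. simpl.
    rewrite Bool.andb_true_r. ring.
Qed.

Lemma reindex (a : nat -> R) (D : nset) (g : nat -> nat) :
  (forall x, 0 <= a x) ->
  (forall x y, D x = true -> D y = true -> g x = g y -> x = y) ->
  forall n B N, (forall x, (x < n)%nat -> D x = true -> B (g x) = true /\ (g x < N)%nat) ->
  psum (fun x => a (g x)) D n <= psum a B N.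
Proof.
  intros Ha Hinj. assert (Hpos : forall B N, 0 <= psum a B N).
  { intros B N. induction N; simpl; [lra|]. destruct (B N); [specialize (Ha N)|]; lra. }
  induction n as [|n IH]; intros B N H; simpl; [apply Hpos|].
  destruct (D n) eqn:Dn.
  - destruct (H n ltac:(lia) Dn) as [Hb Hn].
    rewrite (psum_remove a B (g n) N Hn Hb).
    apply Rplus_le_compat_r. apply IH.
    intros x Hx Dx. destruct (H x ltac:(lia) Dx) as [Hb' Hn']. split; auto.
    rewrite Hb'. simpl. destruct (Nat.eqb_spec (g x) (g n)); auto.
    apply Hinj in e; auto. lia.
  - rewrite Rplus_0_r. apply IH. intros x Hx Dx. apply H; auto.
Qed.

Lemma bound_ex (g : nat -> nat) n : exists N, forall x, (x < n)%nat -> (g x < N)%nat.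
Proof.
  induction n as [|n [N IH]]; [exists 0%nat; lia|].
  exists (S (Nat.max N (g n))). intros x Hx. destruct (Nat.eq_dec x n) as [->|]; [lia|].
  specialize (IH x ltac:(lia)). lia.
Qed.

Lemma reindex' (a : nat -> R) (D B : nset) (g : nat -> nat) :
  (forall x, 0 <= a x) ->
  (forall x y, D x = true -> D y = true -> g x = g y -> x = y) ->
  (forall x, D x = true -> B (g x) = true) ->
  forall n, exists N, psum (fun x => a (g x)) D n <= psum a B N.
Proof.
  intros Ha Hinj HB n. destruct (bound_ex g n) as [N HN]. exists N.
  apply reindex; auto.
Qed.

Lemma rpow_nonneg x y : 0 <= rpow x y.
Proof. unfold rpow. destruct (Rle_dec x 0); [lra|]. unfold Rpower. left. apply exp_pos. Qed.

Lemma psum_growing (f : nat -> R) (A : nset) : (forall x, 0 <= f x) -> Un_growing (psum f A).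
Proof. intros H n. simpl. destruct (A n); [specialize (H n)|]; lra. Qed.

Lemma dom_cv u v : Un_growing u -> Un_growing v ->
  (forall n, exists N, u n <= v N) -> (forall n, exists N, v n <= u N) ->
  forall l, Un_cv u l -> Un_cv v l.
Proof.
  intros Gu Gv H1 H2 l Hu eps Heps.
  destruct (Hu eps Heps) as [N0 HN0].
  specialize (HN0 N0 (le_n _)). unfold R_dist in HN0.
  apply Rabs_def2 in HN0.
  destruct (H1 N0) as [N1 HN1].
  exists N1. intros n Hn. unfold R_dist.
  pose proof (tech9 v Gv N1 n Hn).
  destruct (H2 n) as [M HM]. pose proof (growing_ineq u l Gu Hu M).
  apply Rabs_def1; lra.
Qed.


Section Ops.
Variable sg : nat -> nat -> nat.
Variable pre : nat -> nat -> option nat.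
Variable grade : nat -> Z.
Hypothesis pre_sg : forall j x, pre j (sg j x) = Some x.
Hypothesis sg_pre : forall j x y, pre j y = Some x -> sg j x = y.
Hypothesis grade_sg : forall j x, grade (sg j x) = (grade x + 1)%Z.
Variable p : R.

Let rho := mkrho sg pre.

Definition getw (j y : nat) : nat := match pre j y with Some x => x | None => 0%nat end.
Definition inF (j y : nat) : bool := match pre j y with Some _ => true | None => false end.

Lemma getw_inj j : forall x y, inF j x = true -> inF j y = true -> getw j x = getw j y -> x = y.
Proof.
  intros x y. unfold inF, getw.
  destruct (pre j x) eqn:Ex, (pre j y) eqn:Ey; try discriminate. intros _ _ ->.
  apply sg_pre in Ex. apply sg_pre in Ey. congruence.
Qed.

Lemma sg_inj j : forall x y, sg j x = sg j y -> x = y.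
Proof. intros x y H. pose proof (pre_sg j x). rewrite H, pre_sg in H0. congruence. Qed.

Lemma gen_bound a f M : (forall n, pnorm_partial p f n <= M) ->
  forall n, pnorm_partial p (rho a f) n <= M.
Proof.
  intros Hf n. unfold pnorm_partial.
  set (A := fun w => rpow (Cmod (f w)) p).
  assert (HA : forall x, 0 <= A x) by (intro; apply rpow_nonneg).
  destruct a as [j|j]; simpl.
  - rewrite (psum_ext _ (fun x => A (getw j x)) _ (inF j) n).
    + destruct (reindex' A (inF j) (fun _ => true) (getw j) HA (getw_inj j) (fun _ _ => eq_refl) n)
        as [N HN]. eapply Rle_trans; [exact HN|]. apply Hf.
    + intros x _. unfold A, inF, getw. destruct (pre j x); auto.
      rewrite Cmod_C0. apply rpow_0.
  - destruct (reindex' A (fun _ => true) (fun _ => true) (sg j) HA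
        (fun x y _ _ => sg_inj j x y) (fun _ _ => eq_refl) n) as [N HN].
    eapply Rle_trans; [exact HN|]. apply Hf.
Qed.

Lemma gen_bounded a : bounded_op p (rho a).
Proof.
  split; [|split; [|split]].
  - intros f [M HM]. exists M. apply gen_bound. auto.
  - intros f g _ _ x. destruct a; simpl; auto. destruct (pre j x); auto.
    unfold C0, Cadd; simpl; f_equal; ring.
  - intros c f _ x. destruct a; simpl; auto. destruct (pre j x); auto.
    unfold C0, Cmul; simpl; f_equal; ring.
  - exists 1. split; [lra|]. intros f M HM n. rewrite Rmult_1_l. apply gen_bound. auto.
Qed.

Lemma free k : rep_free p k rho.
Proof.
  exists (fun m x => Z.eqb (grade x) m). split; [|split].
  - intro x. exists (grade x). apply Z.eqb_refl.
  - intros m m' x H1 H2. apply Z.eqb_eq in H1, H2. congruence.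
  - intros j _ m f _ Hs. split.
    + intros x Hx. simpl. destruct (pre j x) eqn:E; auto.
      apply Hs. apply sg_pre in E. subst x. rewrite grade_sg in Hx.
      apply Z.eqb_neq in Hx. apply Z.eqb_neq. lia.
    + intros x Hx. simpl. apply Hs. rewrite grade_sg.
      apply Z.eqb_neq in Hx. apply Z.eqb_neq. lia.
Qed.

Lemma Cinv_C1 : Cinv C1 = C1.
Proof.
  unfold Cinv, C1; simpl. replace (1 * (1 * 1) + 0 * (0 * 1)) with 1 by ring.
  f_equal; field.
Qed.

Lemma rpow_1' y : rpow 1 y = 1.
Proof.
  unfold rpow. destruct (Rle_dec 1 0); [lra|]. unfold Rpower. rewrite ln_1, Rmult_0_r. apply exp_0.
Qed.

Lemma ext_sum_from u v : (forall n, exists N, psum (fun _ => 1) u n <= psum (fun _ => 1) v N) ->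
  (forall n, exists N, psum (fun _ => 1) v n <= psum (fun _ => 1) u N) ->
  ext_sum_eq (fun _ => 1) u (fun _ => 1) v.
Proof.
  intros H1 H2 l. assert (G : forall A, Un_growing (psum (fun _ => 1) A)).
  { intro A. apply psum_growing. intro; lra. }
  split; apply dom_cv; auto.
Qed.

Lemma spatial j : spatial_pair p (rho (gs j)) (rho (gt j)).
Proof.
  set (E := fun _ : nat => true).
  set (F := inF j).
  set (Sg := fun (A : nset) y => match pre j y with Some x => A x | None => false end).
  set (Sg' := fun (B : nset) x => B (sg j x)).
  set (T := fun (f : nat -> C) y => match pre j y with Some x => f x | None => C0 end).
  set (T' := fun (f : nat -> C) x => f (sg j x)).
  assert (FS : forall x, F (sg j x) = true) by (intro; unfold F, inF; rewrite pre_sg; auto).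
  assert (Hsub : forall B, subset B F -> forall y, pre j y = None -> B y = false).
  { intros B HB y Hy. destruct (B y) eqn:E1; auto. apply HB in E1. unfold F, inF in E1.
    rewrite Hy in E1. discriminate. }
  exists E, F, Sg, Sg', (fun _ => C1), T, T', (fun _ => 1), (fun _ => 1).
  split; [|split; [|split; [|split; [|split; [|split; [|split; [|split; [|split]]]]]]]].
  -
    split; [split; [|split; [|split; [|split; [|split]]]]|split].
    + intros A B _ H y. unfold Sg. destruct (pre j y); auto.
    + intros A _ y. unfold Sg, F, inF. destruct (pre j y); auto.
    + intro y. unfold Sg, F, inF, E. destruct (pre j y); auto.
    + intros A _ y. unfold Sg, F, inF, E. destruct (pre j y); auto.
    + intros A B _ _ y. unfold Sg. destruct (pre j y); auto.
    + intros An U _ HU y. unfold Sg. destruct (pre j y).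
      * apply HU.
      * split; [discriminate|intros [n Hn]; discriminate].
    + intros A B _ _ H x. specialize (H (sg j x)). unfold Sg in H. rewrite pre_sg in H. exact H.
    + intros B HB. exists (Sg' B). split; [intros ??; reflexivity|].
      intro y. unfold Sg, Sg'. destruct (pre j y) eqn:Ey.
      * apply sg_pre in Ey. congruence.
      * symmetry. apply (Hsub B HB y Ey).
  -
    split; [split; [|split; [|split; [|split; [|split]]]]|split].
    + intros A B _ H x. apply H.
    + intros A _ x _. reflexivity.
    + intro x. apply FS.
    + intros A _ x. unfold Sg', E. rewrite FS. auto.
    + intros A B _ _ x. reflexivity.
    + intros An U _ HU x. apply HU.
    + intros A B HA HB H y. destruct (pre j y) eqn:Ey.
      * apply sg_pre in Ey. subst y. apply H.
      * rewrite (Hsub A HA y Ey), (Hsub B HB y Ey). auto.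
    + intros B _. exists (Sg B). split.
      * intros y. unfold Sg, F, inF. destruct (pre j y); auto.
      * intro x. unfold Sg', Sg. rewrite pre_sg. auto.
  - split.
    + intros A _ x. unfold Sg', Sg. rewrite pre_sg. auto.
    + intros B HB y. unfold Sg, Sg'. destruct (pre j y) eqn:Ey.
      * apply sg_pre in Ey. congruence.
      * symmetry. apply (Hsub B HB y Ey).
  -
    split; [|split; [|split; [|split]]].
    + intros f g H y _. unfold T. destruct (pre j y); auto.
    + intros A _ y _. unfold T, indic, Sg. destruct (pre j y); auto.
    + intros f g y Hy. unfold T. unfold F, inF in Hy. destruct (pre j y); auto; discriminate.
    + intros c f y Hy. unfold T. unfold F, inF in Hy. destruct (pre j y); auto; discriminate.
    + intros fn f H y Hy. unfold T. unfold F, inF in Hy. destruct (pre j y); [apply H; auto|discriminate].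
  -
    split; [|split; [|split; [|split]]].
    + intros f g H y _. unfold T'. apply H. apply FS.
    + intros A _ y _. reflexivity.
    + reflexivity.
    + reflexivity.
    + intros fn f H y _. unfold T'. apply H. apply FS.
  -
    split; [intros; lra|]. intros A _. apply ext_sum_from.
    + intro n. apply (reindex' (fun _ => 1) A (Sg A) (sg j)); [intro; lra| |].
      * intros x y _ _. apply sg_inj.
      * intros x Hx. unfold Sg. rewrite pre_sg. auto.
    + intro n. apply (reindex' (fun _ => 1) (Sg A) A (getw j)); [intro; lra| |].
      * intros x y Hx Hy. apply getw_inj; unfold inF; unfold Sg in Hx, Hy;
        [destruct (pre j x)|destruct (pre j y)]; auto.
      * intros x Hx. unfold Sg in Hx. unfold getw. destruct (pre j x); auto; discriminate.
  - split; [intros; lra|]. intros B HB. apply ext_sum_from.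
    + intro n. apply (reindex' (fun _ => 1) B (Sg' B) (getw j)); [intro; lra| |].
      * intros x y Hx Hy. apply getw_inj; apply HB; auto.
      * intros y Hy. unfold Sg', getw. destruct (pre j y) eqn:Ey.
        -- apply sg_pre in Ey. congruence.
        -- rewrite (Hsub B HB y Ey) in Hy. discriminate.
    + intro n. apply (reindex' (fun _ => 1) (Sg' B) B (sg j)); [intro; lra| |].
      * intros x y _ _. apply sg_inj.
      * intros x Hx. exact Hx.
  - intros y _. apply Cmod_C1.
  - intros f _ x. unfold spi, F, inF, T. simpl. destruct (pre j x); auto.
    rewrite rpow_1'. unfold RtoC, restrict, E. unfold C1, Cmul; simpl.
    destruct (f n) as [u v]; simpl; f_equal; ring.
  - intros f _ x. unfold spi, E, T'. simpl. rewrite Cinv_C1, rpow_1'.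
    unfold restrict. rewrite FS. unfold RtoC, C1, Cmul; simpl.
    destruct (f (sg j x)) as [u v]; simpl; f_equal; ring.
Qed.
End Ops.


Definition zenc (m : Z) : nat :=
  if Z.leb 0 m then (2 * Z.to_nat m)%nat else S (2 * Z.to_nat (- m - 1)).
Definition zdec (n : nat) : Z :=
  if Nat.even n then Z.of_nat (Nat.div2 n) else (- Z.of_nat (Nat.div2 n) - 1)%Z.

Lemma par t : Nat.even (2 * t) = true /\ Nat.div2 (2 * t) = t /\
  Nat.even (S (2 * t)) = false /\ Nat.div2 (S (2 * t)) = t.
Proof.
  induction t as [|t IH]; [repeat split|].
  replace (2 * S t)%nat with (S (S (2 * t))) by lia.
  destruct IH as [A [B [C' D]]]. split; [exact A|split; [|split; [exact C'|]]].
  - change (S (Nat.div2 (2 * t)) = S t). rewrite B. auto.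
  - change (S (Nat.div2 (S (2 * t))) = S t). rewrite D. auto.
Qed.

Lemma zdec_enc m : zdec (zenc m) = m.
Proof.
  unfold zenc, zdec. destruct (Z.leb_spec 0 m).
  - destruct (par (Z.to_nat m)) as [A [B _]]. rewrite A, B. lia.
  - destruct (par (Z.to_nat (-m-1))) as [_ [_ [A B]]]. rewrite A, B. lia.
Qed.

Lemma zenc_dec n : zenc (zdec n) = n.
Proof.
  destruct (Nat.Even_or_Odd n) as [[t ->]|[t ->]].
  - destruct (par t) as [A [B _]]. unfold zdec. rewrite A, B. unfold zenc.
    destruct (Z.leb_spec 0 (Z.of_nat t)); lia.
  - replace (2 * t + 1)%nat with (S (2 * t)) by lia.
    destruct (par t) as [_ [_ [A B]]]. unfold zdec. rewrite A, B. unfold zenc.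
    destruct (Z.leb_spec 0 (- Z.of_nat t - 1)); lia.
Qed.

Definition enc (m : Z) (b : nat) : nat := Cantor.to_nat (zenc m, b).
Definition dec (x : nat) : Z * nat := let (a, b) := Cantor.of_nat x in (zdec a, b).

Lemma dec_enc m b : dec (enc m b) = (m, b).
Proof. unfold dec, enc. rewrite cancel_of_to. rewrite zdec_enc. auto. Qed.

Lemma enc_dec x : enc (fst (dec x)) (snd (dec x)) = x.
Proof.
  unfold dec, enc. destruct (Cantor.of_nat x) as [a b] eqn:E. cbn [fst snd].
  rewrite zenc_dec, <- E. apply cancel_to_of.
Qed.

Section Inst.
Variable f : nat -> nat -> nat.
Variable finv : nat -> nat -> option nat.
Hypothesis H_fs : forall j b, finv j (f j b) = Some b.
Hypothesis H_sf : forall j b b', finv j b' = Some b -> f j b = b'.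

Definition sgI (j x : nat) : nat := enc (fst (dec x) + 1) (f j (snd (dec x))).
Definition preI (j y : nat) : option nat :=
  match finv j (snd (dec y)) with Some b => Some (enc (fst (dec y) - 1) b) | None => None end.
Definition gradeI (x : nat) : Z := fst (dec x).

Lemma I_pre_sg j x : preI j (sgI j x) = Some x.
Proof.
  unfold preI, sgI. rewrite dec_enc. simpl. rewrite H_fs. f_equal.
  replace (fst (dec x) + 1 - 1)%Z with (fst (dec x)) by lia. apply enc_dec.
Qed.

Lemma I_sg_pre j x y : preI j y = Some x -> sgI j x = y.
Proof.
  unfold preI, sgI. destruct (finv j (snd (dec y))) as [b|] eqn:E; [|discriminate].
  intro H. inversion H; subst. rewrite dec_enc. simpl. rewrite (H_sf _ _ _ E).
  replace (fst (dec y) - 1 + 1)%Z with (fst (dec y)) by lia. apply enc_dec.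
Qed.

Lemma I_grade j x : gradeI (sgI j x) = (gradeI x + 1)%Z.
Proof. unfold gradeI, sgI. rewrite dec_enc. auto. Qed.

Lemma I_disj (P : nat -> Prop) : (forall j j' b b', P j -> P j' -> f j b = f j' b' -> j = j') ->
  forall j j' x x', P j -> P j' -> sgI j x = sgI j' x' -> j = j'.
Proof.
  intros H j j' x x' Hj Hj' E. unfold sgI in E.
  apply (f_equal dec) in E. rewrite !dec_enc in E. inversion E. eauto.
Qed.

Lemma I_cover d : (forall b', exists j b, (j < d)%nat /\ f j b = b') ->
  forall y, exists j x, (j < d)%nat /\ sgI j x = y.
Proof.
  intros H y. destruct (H (snd (dec y))) as [j [b [Hj Hb]]].
  exists j, (enc (fst (dec y) - 1) b). split; auto.
  unfold sgI. rewrite dec_enc. simpl. rewrite Hb.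
  replace (fst (dec y) - 1 + 1)%Z with (fst (dec y)) by lia. apply enc_dec.
Qed.

Lemma I_base (P : nat -> Prop) b0 : (forall j b, P j -> f j b <> b0) ->
  forall j x, P j -> sgI j x <> enc 0 b0.
Proof.
  intros H j x Hj E. unfold sgI in E. apply (f_equal dec) in E. rewrite !dec_enc in E.
  inversion E. eapply H; eauto.
Qed.
End Inst.

Definition fL (d j b : nat) : nat := (d * b + j)%nat.
Definition finvL (d j b' : nat) : option nat :=
  if Nat.leb j b' && Nat.eqb ((b' - j) mod d) 0 then Some ((b' - j) / d)%nat else None.
Definition fC (j b : nat) : nat := S (Cantor.to_nat (j, b)).
Definition finvC (j b' : nat) : option nat :=
  match b' with 0%nat => None | S c => let (j', b) := Cantor.of_nat c in
    if Nat.eqb j' j then Some b else None end.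

Lemma L_fs d j b : (0 < d)%nat -> finvL d j (fL d j b) = Some b.
Proof.
  intro Hd. unfold finvL, fL. replace (d * b + j - j)%nat with (b * d)%nat by lia.
  rewrite Nat.Div0.mod_mul, Nat.div_mul by lia.
  destruct (Nat.leb_spec j (d * b + j)); [auto|lia].
Qed.

Lemma L_sf d j b b' : (0 < d)%nat -> finvL d j b' = Some b -> fL d j b = b'.
Proof.
  intros Hd. unfold finvL, fL.
  destruct (Nat.leb_spec j b'); simpl; [|discriminate].
  destruct (Nat.eqb_spec ((b' - j) mod d) 0); [|discriminate].
  intro Hs. inversion Hs; subst.
  pose proof (Nat.div_mod (b' - j) d ltac:(lia)). lia.
Qed.

Lemma L_disj d j j' b b' : (j < d)%nat -> (j' < d)%nat -> fL d j b = fL d j' b' -> j = j'.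
Proof.
  intros Hj Hj' E. unfold fL in E.
  assert (A : (d * b + j) mod d = j) by (rewrite Nat.add_comm, Nat.mul_comm, Nat.Div0.mod_add; apply Nat.mod_small; auto).
  assert (B : (d * b' + j') mod d = j') by (rewrite Nat.add_comm, Nat.mul_comm, Nat.Div0.mod_add; apply Nat.mod_small; auto).
  congruence.
Qed.

Lemma L_cover d b' : (0 < d)%nat -> exists j b, (j < d)%nat /\ fL d j b = b'.
Proof.
  intro Hd. exists (b' mod d)%nat, (b' / d)%nat. split; [apply Nat.mod_upper_bound; lia|].
  unfold fL. symmetry. apply Nat.div_mod. lia.
Qed.

Lemma C_fs j b : finvC j (fC j b) = Some b.
Proof. unfold finvC, fC. rewrite cancel_of_to. rewrite Nat.eqb_refl. auto. Qed.

Lemma C_sf j b b' : finvC j b' = Some b -> fC j b = b'.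
Proof.
  unfold finvC, fC. destruct b' as [|c]; [discriminate|].
  destruct (Cantor.of_nat c) as [j' b0] eqn:E.
  destruct (Nat.eqb_spec j' j); [|discriminate]. intro H; inversion H; subst.
  rewrite <- E, cancel_to_of. auto.
Qed.

Lemma C_disj j j' b b' : fC j b = fC j' b' -> j = j'.
Proof.
  unfold fC. intro E. apply Nat.succ_inj in E as E'. apply (f_equal Cantor.of_nat) in E'.
  rewrite !cancel_of_to in E'. congruence.
Qed.


Lemma main_gen (k : kind) (p : R) (f : nat -> nat -> nat) (finv : nat -> nat -> option nat) :
  (forall j b, finv j (f j b) = Some b) ->
  (forall j b b', finv j b' = Some b -> f j b = b') ->
  (forall j j' b b', ok k j -> ok k j' -> f j b = f j' b' -> j = j') ->
  (forall d, k = KL d -> forall b', exists j b, (j < d)%nat /\ f j b = b') ->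
  ((forall d, k <> KL d) -> exists b0, forall j b, ok k j -> f j b <> b0) ->
  exists rho : gen -> op,
    is_rep p k rho /\ rep_injective p k rho /\ rep_free p k rho /\ rep_spatial p k rho.
Proof.
  intros H1 H2 H3 H4 H5.
  pose proof (I_pre_sg f finv H1) as A1.
  pose proof (I_sg_pre f finv H2) as A2.
  pose proof (I_grade f) as A3.
  pose proof (I_disj f (ok k) H3) as A4.
  assert (A5 : forall d, k = KL d -> forall y, exists j x, (j < d)%nat /\ sgI f j x = y).
  { intros d Hd. apply I_cover. apply H4. auto. }
  assert (A6 : (forall d, k <> KL d) -> exists y0, forall j x, ok k j -> sgI f j x <> y0).
  { intro H. destruct (H5 H) as [b0 Hb0]. exists (enc 0 b0). apply (I_base f (ok k)). auto. }
  exists (mkrho (sgI f) (preI finv)). split; [|split; [|split]].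
  - split.
    + intros a _. apply gen_bounded; auto.
    + intros a b _ _ H. eapply is_rep_sound; eauto.
  - eapply injective; eauto.
  - eapply free; eauto.
  - intros j _. apply spatial; auto.
Qed.

Theorem corollary8p4 (k : kind) (p : R) :
  kind_ok k -> 1 <= p -> p <> 2 ->
  exists rho : gen -> op,
    is_rep p k rho /\ rep_injective p k rho /\ rep_free p k rho /\ rep_spatial p k rho.
Proof.
  intros Hk _ _. destruct k as [d|d|]; simpl in Hk.
  - apply (main_gen (KL d) p (fL d) (finvL d)).
    + intros; apply L_fs; lia.
    + intros; eapply L_sf; eauto; lia.
    + intros j j' b b' Hj Hj'. unfold ok in *; simpl in *. apply L_disj; auto.
    + intros d' Hd' b'. injection Hd' as <-. apply L_cover. lia.
    + intro H. exfalso. apply (H d). auto.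
  - apply (main_gen (KC d) p fC finvC).
    + apply C_fs.
    + apply C_sf.
    + intros j j' b b' _ _. apply C_disj.
    + intros; discriminate.
    + intros _. exists 0%nat. intros j b _. unfold fC. discriminate.
  - apply (main_gen KLinf p fC finvC).
    + apply C_fs.
    + apply C_sf.
    + intros j j' b b' _ _. apply C_disj.
    + intros; discriminate.
    + intros _. exists 0%nat. intros j b _. unfold fC. discriminate.
Qed.
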